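(* Let $k\le n<q$ be integers with $q$ a prime power and $q>(n/k)^2$. Let $C$ be a Reed-Solomon code of dimension $k$ and block length $n$ over $\mathbb{F}_q$. Then for at least a $1-q^{-\Omega(k)}$ fraction of error patterns $e\in\mathbb{F}_q^n$ of Hamming weight at most $n-4k$, and for any codeword $c\in C$, the only codeword of $C$ that agrees with $c+e$ in at least $4k$ positions is $c$.
   Context: A Reed-Solomon code of dimension $k$ and block length $n$ over $\mathbb{F}_q$ is the set $\{(f(\alpha_1),\dots,f(\alpha_n)) : f\in\mathbb{F}_q[X],\ \deg f<k\}$ for fixed distinct evaluation points $\alpha_1,\dots,\alpha_n\in\mathbb{F}_q$. The Hamming weight of a vector is its number of nonzero coordinates; two vectors agree in a position if their coordinates there are equal. *)

(* Defs.v *)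
From mathcomp Require Import all_boot all_order all_algebra all_field.
Set Implicit Arguments. Unset Strict Implicit. Unset Printing Implicit Defensive.
Import GRing.Theory.
Local Open Scope ring_scope.

Section RS.
Variables (F : finFieldType) (n k : nat) (alpha : 'I_n -> F).

Definition word := {ffun 'I_n -> F}.

Definition rs_poly (a : {ffun 'I_k -> F}) : {poly F} :=
  \sum_(j < k) (a j)%:P * 'X^j.

Definition rs_encode (a : {ffun 'I_k -> F}) : word :=
  [ffun i => (rs_poly a).[alpha i]].

Definition RScode : {set word} :=
  [set c : word | [exists a : {ffun 'I_k -> F}, c == rs_encode a]].

Definition hweight (e : word) : nat := #|[set i : 'I_n | e i != 0]|.

Definition agreement (x y : word) : nat := #|[set i : 'I_n | x i == y i]|.

Definition addw (x y : word) : word := [ffun i => x i + y i].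

Definition good_error (e : word) : bool :=
  [forall c in RScode, forall c' in RScode,
     ((4 * k <= agreement c' (addw c e))%N ==> (c' == c))].

Definition low_weight_errors : {set word} :=
  [set e : word | (hweight e + 4 * k <= n)%N].

Definition bad_errors : {set word} :=
  [set e in low_weight_errors | ~~ good_error e].

End RS.

(* Main.v *)
Require Import Defs.
From mathcomp Require Import all_boot all_order all_algebra all_field.
From mathcomp Require Import zify.
Set Implicit Arguments. Unset Strict Implicit. Unset Printing Implicit Defensive.
Import GRing.Theory.

Lemma card_bigcup_le (T I : finType) (P : pred I) (A : I -> {set T}) :
  #|\bigcup_(i | P i) A i| <= \sum_(i | P i) #|A i|.
Proof.
elim/big_rec2: _ => [|i B s _ IH]; first by rewrite cards0.
by rewrite (leq_trans (leq_card_setU _ _)) // leq_add2l.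
Qed.

Lemma exists_subset_card (T : finType) (A : {set T}) t :
  t <= #|A| -> exists B : {set T}, B \subset A /\ #|B| = t.
Proof.
elim: t => [|t IH] H; first by exists set0; rewrite sub0set cards0.
have [B [sBA cB]] := IH (ltnW H).
have : 0 < #|A :\: B| by rewrite cardsD (setIidPr sBA) cB subn_gt0.
case/card_gt0P => x; rewrite in_setD => /andP [xB xA].
exists (x |: B); rewrite subUset sub1set xA sBA; split => //.
by rewrite cardsU1 xB cB.
Qed.

Lemma card_fam (F : finFieldType) (n : nat) (T : {set 'I_n}) :
  #|[set u : {ffun 'I_n -> F} | [forall i, if i \in T then u i != 0%R else u i == 1%R]]|
  = (#|F|.-1) ^ #|T|.
Proof.
pose G := fun i : 'I_n => if i \in T then (predC1 (0%R : F) : pred F) else pred1 (1%R : F).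
have -> : [set u : {ffun 'I_n -> F} | [forall i, if i \in T then u i != 0%R else u i == 1%R]]
  = [set u in family G].
  apply/setP => u; rewrite !inE; apply/forallP/familyP => H i; have := H i;
  by rewrite /G; case: (i \in T).
rewrite cardsE card_family.
rewrite foldrE big_image /=.
rewrite (bigID (fun i => i \in T)) /=.
rewrite (eq_bigr (fun _ => #|F|.-1)); last by move=> i iT; rewrite /G iT cardC1.
rewrite prod_nat_const big1 ?muln1 // => i iT.
by rewrite /G (negbTE iT) card1.
Qed.

Lemma A_bound (F : finFieldType) n k (T : {set 'I_n}) (v : word F n) :
  (forall i, i \in T -> v i != 0%R) ->
  #|[set e in low_weight_errors F n k | [forall i in T, e i == v i]]| * (#|F|.-1) ^ #|T|
    <= #|low_weight_errors F n k|.
Proof.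
move=> vnz.
set A := [set e in _ | _].
set U := [set u : {ffun 'I_n -> F} | [forall i, if i \in T then u i != 0%R else u i == 1%R]].
rewrite -card_fam -/U -cardsX.
pose f := fun p : word F n * {ffun 'I_n -> F} =>
  ([ffun i => if i \in T then p.2 i else p.1 i] : word F n).
rewrite -(card_in_imset (f := f)); last first.
  move=> [e u] [e' u']; rewrite !inE /= => /andP [/andP [_ /forallP He] /forallP Hu]
    /andP [/andP [_ /forallP He'] /forallP Hu'] /ffunP Heq.
  congr pair; apply/ffunP => i; have := Heq i; rewrite !ffunE;
    have := He i; have := He' i; have := Hu i; have := Hu' i;
    case: (i \in T) => /=.
  - by move=> _ _ /eqP -> /eqP ->.
  - by [].
  - by [].
  - by move=> /eqP -> /eqP ->.
apply: subset_leq_card; apply/subsetP => _ /imsetP [[e u] Hp ->].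
move: Hp; rewrite !inE /= => /andP [/andP [Le /forallP He] /forallP Hu].
rewrite /hweight in Le *.
suff -> : [set i | f (e, u) i != 0%R] = [set i | e i != 0%R] by [].
apply/setP => i; rewrite !inE /f ffunE /=.
have := He i; have := Hu i; case iT: (i \in T) => //= /negbTE -> /eqP ->.
by rewrite vnz.
Qed.

Lemma size_rs_poly (F : finFieldType) k (a : {ffun 'I_k -> F}) : size (rs_poly a) <= k.
Proof.
apply/leq_sizeP => j kj; rewrite /rs_poly coef_sum.
apply: big1 => j0 _; rewrite coefCM coefXn.
have -> : (j == j0) = false by apply/negbTE; rewrite neq_ltn (leq_trans (ltn_ord j0) kj) orbT.
by rewrite GRing.mulr0.
Qed.

Lemma zeros_lt (F : finFieldType) n k (alpha : 'I_n -> F) (a : {ffun 'I_k -> F}) :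
  injective alpha -> rs_poly a != 0%R ->
  #|[set i | rs_encode alpha a i == 0%R]| < k.
Proof.
move=> inj nz.
set Z := [set i | _].
have := max_poly_roots nz (rs := map alpha (enum Z)).
rewrite size_map -cardE => H; apply: leq_trans (size_rs_poly a); apply: H.
  apply/allP => _ /mapP [i iZ ->]; move: iZ; rewrite mem_enum inE ffunE.
  by rewrite /root.
by rewrite map_inj_uniq ?enum_uniq.
Qed.

Lemma rs_encodeB (F : finFieldType) n k (alpha : 'I_n -> F) (a a' : {ffun 'I_k -> F}) i :
  rs_encode alpha [ffun j => a' j - a j]%R i = (rs_encode alpha a' i - rs_encode alpha a i)%R.
Proof.
rewrite !ffunE -hornerN -hornerD; congr horner.
rewrite /rs_poly -sumrN -big_split /=; apply: eq_bigr => j _.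
by rewrite ffunE polyCB mulrBl.
Qed.


Lemma bad_sub (F : finFieldType) n k (alpha : 'I_n -> F) : injective alpha ->
  bad_errors k alpha \subset
  \bigcup_(p : {ffun 'I_k -> F} * {set 'I_n} |
           (#|p.2| == 3 * k) && [forall i in p.2, rs_encode alpha p.1 i != 0%R])
    [set e in low_weight_errors F n k | [forall i in p.2, e i == rs_encode alpha p.1 i]].
Proof.
move=> inj; apply/subsetP => e; rewrite inE => /andP [Le].
case/forall_inPn => c; rewrite inE => /existsP [a /eqP ->].
case/forall_inPn => c'; rewrite inE => /existsP [a' /eqP ->].
rewrite negb_imply => /andP [Hag Hne].
set b := [ffun j => a' j - a j]%R.
have nzb : rs_poly b != 0%R.
  apply: contra Hne => /eqP b0; apply/eqP/ffunP => i.
  apply/eqP; rewrite -subr_eq0 -rs_encodeB ffunE b0 horner0 //.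
set G := [set i | rs_encode alpha a' i == addw (rs_encode alpha a) e i].
set Z := [set i | rs_encode alpha b i == 0%R].
have HZ := zeros_lt inj nzb; rewrite -/Z in HZ.
have HG : 4 * k <= #|G| by [].
have : 3 * k <= #|G :\: Z|.
  rewrite cardsD.
  have : #|G :&: Z| <= #|Z| by apply: subset_leq_card; apply: subsetIr.
  lia.
case/exists_subset_card => T [sT cT].
apply/bigcupP; exists (b, T) => /=.
  rewrite cT eqxx /=; apply/forall_inP => i /(subsetP sT); rewrite !inE.
  by case/andP.
rewrite inE Le /=; apply/forall_inP => i /(subsetP sT); rewrite !inE => /andP [_].
rewrite rs_encodeB /addw ffunE => /eqP ->.
by rewrite ffunE addrAC subrr add0r.
Qed.

Lemma bad_count (F : finFieldType) n k (alpha : 'I_n -> F) : injective alpha ->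
  #|bad_errors k alpha| * (#|F|.-1) ^ (3 * k)
    <= #|F| ^ k * 'C(n, 3 * k) * #|low_weight_errors F n k|.
Proof.
move=> inj.
set P := fun p : {ffun 'I_k -> F} * {set 'I_n} =>
           (#|p.2| == 3 * k) && [forall i in p.2, rs_encode alpha p.1 i != 0%R].
apply: (@leq_trans ((\sum_(p | P p)
   #|[set e in low_weight_errors F n k | [forall i in p.2, e i == rs_encode alpha p.1 i]]|)
     * (#|F|.-1) ^ (3 * k))).
  rewrite leq_mul2r; apply/orP; right.
  apply: leq_trans (subset_leq_card (bad_sub k inj)) _.
  exact: (card_bigcup_le P).

rewrite big_distrl /=.
apply: (@leq_trans (\sum_(p | P p) #|low_weight_errors F n k|)).
  apply: leq_sum => p /andP [/eqP cT /forall_inP Hnz].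
  rewrite -cT; exact: A_bound.
rewrite sum_nat_const leq_mul2r; apply/orP; right.
have -> : #|F| ^ k * 'C(n, 3 * k) =
   #|setX [set: {ffun 'I_k -> F}] [set T : {set 'I_n} | #|T| == 3 * k]|.
  by rewrite cardsX cardsT card_ffun card_ord card_draws card_ord.
apply: subset_leq_card; apply/subsetP => p; rewrite !inE.
by case/andP => ->.
Qed.

Lemma final_nat X Y q n k C : 0 < k -> 2 ^ 12 <= q ->
  9*(n*n) <= q*((3*k)*(3*k)) -> C * (3*k)`! <= n ^ (3*k) ->
  (3*k) ^ (3*k) <= 3 ^ (3*k) * (3*k)`! -> X * q.-1 ^ (3*k) <= q ^ k * C * Y ->
  X ^ 4 * q ^ k <= Y ^ 4.
Proof.
move=> k0 q12; move Et: (3 * k) => t Hn HC Ht HX.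
have q2 : 2 <= q by apply: leq_trans q12.
have S1 : X * q.-1 ^ t * t ^ t <= q ^ k * (3 ^ t * n ^ t) * Y.
  have h2 := leq_mul (leqnn (X * q.-1 ^ t)) Ht.
  have h3 := leq_mul HX (leqnn (3 ^ t * t`!)).
  have h4 := leq_mul (leqnn (q ^ k * Y * 3 ^ t)) HC.
  lia.
have S2 : (X * q.-1 ^ t * t ^ t) ^ 2 <= (q ^ k * (3 ^ t * n ^ t) * Y) ^ 2.
  by rewrite leq_exp2r.
have E9 : (3 ^ t * n ^ t) ^ 2 = (9 * (n * n)) ^ t.
  by rewrite -expnMn -expnM (mulnC t 2) expnM expnMn mulnn.
have H9 : (9 * (n * n)) ^ t <= (q * (t * t)) ^ t by rewrite leq_exp2r // -Et; lia.
have S2' : X ^ 2 * (q.-1 ^ t) ^ 2 * (t ^ t) ^ 2 <= (q ^ k) ^ 2 * (9 * (n * n)) ^ t * Y ^ 2.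
  have e1 : (X * q.-1 ^ t * t ^ t) ^ 2 = X ^ 2 * (q.-1 ^ t) ^ 2 * (t ^ t) ^ 2 by rewrite !expnMn.
  have e2 : (q ^ k * (3 ^ t * n ^ t) * Y) ^ 2 = (q ^ k) ^ 2 * (9 * (n * n)) ^ t * Y ^ 2 by rewrite -E9 !expnMn.
  by rewrite -e1 -e2.
have Ett : (q * (t * t)) ^ t = q ^ t * (t ^ t) ^ 2 by rewrite !expnMn -mulnn.
have S3 : X ^ 2 * (q.-1 ^ t) ^ 2 <= (q ^ k) ^ 2 * q ^ t * Y ^ 2.
  have h := leq_mul (leqnn ((q ^ k) ^ 2 * Y ^ 2)) H9.
  rewrite Ett in h.
  have t0 : 0 < t by rewrite -Et muln_gt0 k0.
  have tp : 0 < (t ^ t) ^ 2 by rewrite !expn_gt0 t0.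
  rewrite -(leq_pmul2r tp).
  move: S2' h tp; move: (X ^ 2) ((q.-1 ^ t) ^ 2) ((t ^ t) ^ 2) ((q ^ k) ^ 2) ((9 * (n * n)) ^ t) (Y ^ 2) (q ^ t) => a b c d e f g.
  move=> S h' tp'; clear -S h' tp'; lia.
have t0 : 0 < t by rewrite -Et muln_gt0 k0.
have q0 : 0 < q by apply: leq_trans q2.
have hq : q ^ t <= 2 ^ t * q.-1 ^ t.
  by rewrite -expnMn leq_exp2r //; clear -q2; lia.
have S4 : X ^ 2 * q ^ k <= (2 ^ t) ^ 2 * Y ^ 2.
  have e : (q ^ t) ^ 2 = ((q ^ k) ^ 2 * q ^ t) * q ^ k.
    by rewrite -!expnM -!expnD -Et; congr (q ^ _); clear; lia.
  have pos : 0 < (q ^ k) ^ 2 * q ^ t by rewrite muln_gt0 !expn_gt0 q0.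
  rewrite -(leq_pmul2l pos).
  have h1' : X ^ 2 * (q ^ t) ^ 2 <= X ^ 2 * (2 ^ t * q.-1 ^ t) ^ 2.
    by rewrite leq_mul2l leq_exp2r // hq orbT.
  rewrite expnMn e in h1'.
  have h2 := leq_mul S3 (leqnn ((2 ^ t) ^ 2)).
  move: h1' h2 pos; move: (X ^ 2) ((q.-1 ^ t) ^ 2) ((q ^ k) ^ 2) (q ^ t) (Y ^ 2) (q ^ k) ((2 ^ t) ^ 2) => a b c d f g h.
  move=> H1 H2 P; clear -H1 H2 P; lia.
have h12 : (2 ^ t) ^ 2 * (2 ^ t) ^ 2 <= q ^ k.
  have -> : (2 ^ t) ^ 2 * (2 ^ t) ^ 2 = (2 ^ 12) ^ k.
    by rewrite -!expnM -expnD -Et; congr (2 ^ _); clear; lia.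
  by rewrite leq_exp2r.
have qk : 0 < q ^ k by rewrite expn_gt0 q0.
rewrite -(leq_pmul2r qk).
have S5 := leq_mul S4 S4.
have h3 := leq_mul h12 (leqnn (Y ^ 2 * Y ^ 2)).
have e4 : forall z, z ^ 4 = z ^ 2 * z ^ 2 by move=> z; rewrite -expnD.
rewrite !e4.
move: S5 h3; move: (X ^ 2) (Y ^ 2) (q ^ k) ((2 ^ t) ^ 2) => a b c d H1 H2.
clear -H1 H2; lia.
Qed.

From Stdlib Require Import Reals Lra.

Lemma exp_pow_R (x : R) (m : nat) : (exp x ^ m)%R = exp (INR m * x).
Proof.
elim: m => [|m IH]; first by rewrite /= Rmult_0_l exp_0.
rewrite S_INR /= IH -exp_plus; congr exp; lra.
Qed.

Lemma step_R (t : nat) : (0 < t)%N -> ((INR t + 1) ^ t <= 3 * INR t ^ t)%R.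
Proof.
move=> t0.
have tp : (0 < INR t)%R by apply: lt_0_INR; apply/ltP.
have -> : (INR t + 1 = INR t * (1 + / INR t))%R by field; lra.
rewrite Rpow_mult_distr.
have h1 : ((1 + / INR t) ^ t <= exp (/ INR t) ^ t)%R.
  apply: pow_incr; split; last exact: exp_ineq1_le.
  have := Rinv_0_lt_compat _ tp; lra.
rewrite exp_pow_R Rinv_r in h1; last lra.
have h2 := exp_le_3.
have h3 : (0 <= INR t ^ t)%R by apply: pow_le; lra.
have h4 : (0 <= (1 + / INR t) ^ t)%R by apply: pow_le; have := Rinv_0_lt_compat _ tp; lra.
nra.
Qed.

Lemma INR_expn m n : INR (expn m n) = (INR m ^ n)%R.
Proof. by elim: n => [|n IH] //; rewrite expnS -multE mult_INR IH. Qed.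

Lemma step_nat (t : nat) : (expn t.+1 t <= 3 * expn t t)%N.
Proof.
case: t => [|t] //.
apply/leP/INR_le; rewrite -multE mult_INR !INR_expn -(addn1 t.+1) plus_INR.
have H := @step_R t.+1 isT.
change (INR 1) with 1%R.
replace (INR 3) with 3%R by (simpl; lra).
exact: H.
Qed.

Lemma fact_bound (t : nat) : (expn t t <= expn 3 t * t`!)%N.
Proof.
elim: t => [|t IH] //.
rewrite expnS factS.
apply: leq_trans (leq_mul (leqnn t.+1) (step_nat t)) _.
apply: leq_trans (leq_mul (leqnn t.+1) (leq_mul (leqnn 3) IH)) _.
rewrite expnS; move: (expn 3 t) (t`!) => a b; lia.
Qed.

Lemma binom_bound n t : ('C(n, t) * t`! <= expn n t)%N.
Proof.
rewrite bin_ffact ffact_prod.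
apply: (@leq_trans (\prod_(i < t) n)); first by apply: leq_prod => i _; apply: leq_subr.
by rewrite prod_nat_const card_ord.
Qed.

Theorem corollary3p2 :
  exists c : R, (0 < c)%R /\
  exists k0 : nat,
  forall (F : finFieldType) (n k : nat) (alpha : 'I_n -> F),
    injective alpha ->
    (k0 <= k)%N -> (k <= n)%N -> (n < #|F|)%N ->
    (n * n < #|F| * (k * k))%N ->
    (INR #|@bad_errors F n k alpha|
       <= Rpower (INR #|F|) (- (c * INR k)) * INR #|low_weight_errors F n k|)%R.
Proof.
exists (/ 4)%R; split; first lra.
exists 4096 => F n k alpha inj k0 kn nq Hnk.
have key : (expn #|bad_errors k alpha| 4 * expn #|F| k <= expn #|low_weight_errors F n k| 4)%N.
  apply: (@final_nat _ _ _ n k ('C(n, 3 * k))).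
  - by apply: leq_trans k0.
  - have -> : expn 2 12 = 4096 by [].
    by apply: leq_trans (ltnW (leq_ltn_trans kn nq)).
  - move: Hnk; move: (n * n)%N => nn; lia.
  - exact: binom_bound.
  - exact: fact_bound.
  - exact: bad_count.
move: key.
set X := #|bad_errors k alpha|; set Y := #|low_weight_errors F n k|; set q := #|F|.
move=> key.
have qp : (0 < INR q)%R by apply: lt_0_INR; apply/ltP; apply: leq_ltn_trans nq.
set r := Rpower (INR q) (/ 4 * INR k).
have rp : (0 < r)%R by rewrite /r /Rpower; apply: exp_pos.
have r4 : (r ^ 4 = INR q ^ k)%R.
  rewrite -(@Rpower_pow 4 r rp) /r Rpower_mult -(@Rpower_pow k _ qp); congr Rpower.
  replace (INR 4) with 4%R by (simpl; lra); field.
have key' : ((INR X * r) ^ 4 <= INR Y ^ 4)%R.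
  rewrite Rpow_mult_distr r4 -!INR_expn -mult_INR.
  by apply: le_INR; apply/leP.
rewrite Rpower_Ropp -/r.
have X0 : (0 <= INR X)%R by apply: pos_INR.
have Y0 : (0 <= INR Y)%R by apply: pos_INR.
suff h : (INR X * r <= INR Y)%R.
  apply: (Rmult_le_reg_l r) => //; rewrite -Rmult_assoc Rinv_r; lra.
apply: Rnot_lt_le => hlt.
have h0 : (0 <= INR Y)%R := Y0.
have : (INR Y ^ 4 < (INR X * r) ^ 4)%R.
  set a := (INR X * r)%R in hlt key' *; set b := INR Y in hlt h0 key' *.
  have hb : (0 < a - b)%R by lra.
  have e : (a ^ 4 - b ^ 4 = (a - b) * ((a + b) * (a * a + b * b)))%R by ring.
  have : (0 < (a + b) * (a * a + b * b))%R.
    apply: Rmult_lt_0_compat; nra.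
  nra.
lra.
Qed.
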